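(* Let $G$ be a directed graph with vertices $s,t$ and $k\ge1$. The set $U^k_{\mathrm{lr}}$ together with the relation $\preceq$ is a distributive lattice $L^*$, and for any $C_1=[X_1,\dots,X_k]$ and $C_2=[Y_1,\dots,Y_k]$ in $L^*$ its join and meet are given by $C_1\vee C_2=[S_{\max}(X_1\cup Y_1),\dots,S_{\max}(X_k\cup Y_k)]$ and $C_1\wedge C_2=[S_{\min}(X_1\cup Y_1),\dots,S_{\min}(X_k\cup Y_k)]$.
   Context: An $s$-$t$ cut of a directed graph $G$ is a set $X\subseteq E(G)$ such that removing $X$ leaves no directed $s$-$t$ path; $\Gamma_G(s,t)$ is the set of $s$-$t$ cuts of minimum cardinality $\lambda(G)$. Fix a maximum-size collection $\mathcal P$ of pairwise edge-disjoint directed $s$-$t$ paths (so $|\mathcal P|=\lambda(G)$ and each minimum $s$-$t$ cut contains exactly one edge of each path in $\mathcal P$). For $X,Y\in\Gamma_G(s,t)$, $S_{\min}(X\cup Y)$ (resp. $S_{\max}(X\cup Y)$) is the set consisting, for each $p\in\mathcal P$, of the edge of $(X\cup Y)\cap p$ occurring first (resp. last) along $p$. For $s$-$t$ cuts $X,Y$, $X\le Y$ means every directed $s$-$t$ path in $G$ meets an edge of $X$ at or before an edge of $Y$. $U^k_{\mathrm{lr}}$ is the set of $k$-tuples $[X_1,\dots,X_k]$ of elements of $\Gamma_G(s,t)$ with $X_i\le X_j$ for all $i<j$; for $C_1=[X_i]_i,C_2=[Y_i]_i\in U^k_{\mathrm{lr}}$, $C_1\preceq C_2$ iff $X_i\le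 Y_i$ for all $i\in\{1,\dots,k\}$. *)

(* Defs.v *)
From mathcomp Require Import all_boot.
Set Implicit Arguments. Unset Strict Implicit. Unset Printing Implicit Defensive.

Section Graph.
Variables (V E : finType) (src dst : E -> V) (s t : V).

Fixpoint walk_to_t (x : V) (p : seq E) : bool :=
  match p with
  | [::] => x == t
  | e :: p' => (src e == x) && walk_to_t (dst e) p'
  end.

Definition is_stpath (p : seq E) : bool :=
  walk_to_t s p && uniq (s :: map dst p).

Definition is_cut (X : {set E}) : Prop :=
  forall p, is_stpath p -> exists2 e, e \in p & e \in X.

Definition is_min_cut (X : {set E}) : Prop :=
  is_cut X /\ forall Y : {set E}, is_cut Y -> #|X| <= #|Y|.

Definition cut_le (X Y : {set E}) : Prop :=
  forall p, is_stpath p ->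
    exists p1 e p2, [/\ p = p1 ++ e :: p2, e \in X &
                        all (fun f => f \notin Y) p1].

Definition edge_disjoint_paths (P : seq (seq E)) : bool :=
  all is_stpath P && pairwise (fun p q : seq E => [disjoint p & q]) P.

Definition max_path_packing (P : seq (seq E)) : Prop :=
  edge_disjoint_paths P /\
  forall Q, edge_disjoint_paths Q -> size Q <= size P.

Definition S_min (P : seq (seq E)) (Z : {set E}) : {set E} :=
  [set e | has (fun p => [&& e \in p, e \in Z &
             all (fun f => (f \in Z) ==> (index e p <= index f p)) p]) P].

Definition S_max (P : seq (seq E)) (Z : {set E}) : {set E} :=
  [set e | has (fun p => [&& e \in p, e \in Z &
             all (fun f => (f \in Z) ==> (index f p <= index e p)) p]) P].

Definition in_Ulr (k : nat) (C : {ffun 'I_k -> {set E}}) : Prop :=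
  (forall i, is_min_cut (C i)) /\
  (forall i j : 'I_k, i < j -> cut_le (C i) (C j)).

Definition tuple_le (k : nat) (C1 C2 : {ffun 'I_k -> {set E}}) : Prop :=
  forall i, cut_le (C1 i) (C2 i).

Definition tuple_join (P : seq (seq E)) (k : nat)
  (C1 C2 : {ffun 'I_k -> {set E}}) : {ffun 'I_k -> {set E}} :=
  [ffun i => S_max P (C1 i :|: C2 i)].

Definition tuple_meet (P : seq (seq E)) (k : nat)
  (C1 C2 : {ffun 'I_k -> {set E}}) : {ffun 'I_k -> {set E}} :=
  [ffun i => S_min P (C1 i :|: C2 i)].

End Graph.

(* Main.v *)
Require Import Defs.
From mathcomp Require Import all_boot zify.
From Stdlib Require Import Classical ClassicalEpsilon.
Set Implicit Arguments. Unset Strict Implicit. Unset Printing Implicit Defensive.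

Module A.

Definition asbool (P : Prop) : bool :=
  if excluded_middle_informative P then true else false.
Lemma asboolP (P : Prop) : reflect P (asbool P).
Proof. rewrite /asbool; case: excluded_middle_informative => h; by constructor. Qed.

Lemma cardsum (T : finType) (P : pred T) : #|[set x | P x]| = \sum_x (P x : nat).
Proof. rewrite -sum1_card big_mkcond; apply: eq_bigr => x _; rewrite inE; by case: (P x). Qed.

Section Walks.
Variables (V E : finType) (src dst : E -> V).

Fixpoint walk (x y : V) (p : seq E) : bool :=
  match p with
  | [::] => x == y
  | e :: p' => (src e == x) && walk (dst e) y p'
  end.

Lemma walk_cat x y z p q : walk x y p -> walk y z q -> walk x z (p ++ q).
Proof.
elim: p x => [|e p IH] x /=; first by move/eqP->.
by case/andP=> -> w /(IH _ w).
Qed.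

Lemma walk_split x z p q : walk x z (p ++ q) -> exists2 y, walk x y p & walk y z q.
Proof.
elim: p x => [|e p IH] x /=; first by move=> w; exists x.
case/andP=> /eqP <- /IH [y w1 w2]; exists y => //; by rewrite eqxx.
Qed.

Lemma walk_split1 x z p e q : walk x z (p ++ e :: q) -> walk x (src e) p /\ walk (dst e) z q.
Proof. by case/walk_split=> y w1 /= /andP [/eqP -> w2]. Qed.

Lemma walk_rcons x p e : walk x (src e) p -> walk x (dst e) (rcons p e).
Proof. by move=> w; rewrite -cats1; apply: walk_cat w _; rewrite /= !eqxx. Qed.

Lemma shorten x y p : walk x y p ->
  exists q, [/\ walk x y q, uniq (x :: map dst q) & subseq q p].
Proof.
elim: p x => [|e p IH] x /=.
  by move=> w; exists [::]; rewrite /= w.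
case/andP=> /eqP <- /IH [q [wq uq sq]].
have sqe : subseq q (e :: p) := subseq_trans sq (subseq_cons p e).
case: (boolP (src e \in dst e :: map dst q)) => H.
  move: H; rewrite in_cons => /orP [/eqP ->|].
    by exists q.
  case/mapP=> f fq ef.
  case/splitPr: fq wq uq sq sqe => q1 q2 wq uq sq sqe.
  exists q2; split.
  - by rewrite ef; case: (walk_split1 wq).
  - move: uq; rewrite ef map_cat -cat_cons cat_uniq; by case/and3P.
  - apply: subseq_trans _ sqe; by rewrite -cat_rcons suffix_subseq.
exists (e :: q); split.
- by rewrite /= eqxx.
- by rewrite /= H.
- by rewrite /= eqxx.
Qed.

Definition delta (A : {set V}) : {set E} := [set e | (src e \in A) && (dst e \notin A)].

Lemma in_delta (A : {set V}) e : (e \in delta A) = (src e \in A) && (dst e \notin A).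
Proof. by rewrite inE. Qed.

Lemma exit (A : {set V}) x y p : walk x y p -> x \in A -> y \notin A ->
  exists p1 e p2, [/\ p = p1 ++ e :: p2, src e \in A, dst e \notin A &
                      all (fun f => dst f \in A) p1].
Proof.
elim: p x => [|e p IH] x /=; first by move/eqP->=> ->.
case/andP=> /eqP <- w xA yA.
case: (boolP (dst e \in A)) => dA; last by exists [::], e, p.
have [p1 [f [p2 [-> sf df al]]]] := IH _ w dA yA.
by exists (e :: p1), f, p2; rewrite /= dA al.
Qed.

Lemma exit_delta (A : {set V}) x y p : walk x y p -> x \in A -> y \notin A ->
  exists2 e, e \in p & e \in delta A.
Proof.
move=> w xA yA; have [p1 [e [p2 [-> se de _]]]] := exit w xA yA.
by exists e; rewrite ?mem_cat ?inE ?eqxx ?orbT ?se.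
Qed.

Lemma stay (A : {set V}) x y p : walk x y p -> x \in A ->
  all (fun f => f \notin delta A) p -> y \in A.
Proof.
elim: p x => [|e p IH] x /=; first by move/eqP<-.
case/andP=> /eqP <- w xA /andP [de al]; apply: (IH _ w) => //.
by move: de; rewrite inE xA /= negbK.
Qed.

Lemma walk_src_belast x y p : walk x y p -> map src p = belast x (map dst p).
Proof.
elim: p x => [|e p IH] x //= /andP [/eqP -> w]; by rewrite (IH _ w).
Qed.

Lemma walk_last x y p : walk x y p -> y = last x (map dst p).
Proof. elim: p x => [|e p IH] x /=; [by move/eqP | by case/andP=> _ /IH]. Qed.

Lemma count_src x y p v : walk x y p -> uniq (x :: map dst p) ->
  count (fun e => src e == v) p = (v \in x :: map dst p) && (v != y).
Proof.
move=> w u.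
have -> : count (fun e => src e == v) p = count (pred1 v) (map src p).
  by rewrite count_map; apply: eq_count => e /=; rewrite eq_sym.
rewrite (walk_src_belast w) (walk_last w).
move: u; rewrite lastI rcons_uniq => /andP [nl ub].
rewrite (count_uniq_mem _ ub) mem_rcons in_cons.
case: (v =P last x (map dst p)) => [->|_] /=; first by rewrite (negPf nl).
by rewrite andbT.
Qed.

Lemma count_dst (x : V) p v : uniq (x :: map dst p) ->
  count (fun e => dst e == v) p = (v \in map dst p).
Proof.
move=> /= /andP [_ u].
have -> : count (fun e => dst e == v) p = count (pred1 v) (map dst p).
  by rewrite count_map; apply: eq_count => e /=; rewrite eq_sym.
by rewrite (count_uniq_mem _ u).
Qed.

Lemma card_seq (p : seq E) (P : pred E) : uniq p ->
  #|[set e | (e \in p) && P e]| = count P p.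
Proof.
move=> u; rewrite -size_filter.
have <- : #|[set e in filter P p]| = size (filter P p).
  by rewrite cardsE; apply/card_uniqP; rewrite filter_uniq.
by apply: eq_card => e; rewrite !inE mem_filter andbC.
Qed.

End Walks.

Lemma split_first (T : eqType) (a : pred T) s : has a s ->
  exists s1 x s2, [/\ s = s1 ++ x :: s2, a x & ~~ has a s1].
Proof.
elim: s => [|y s IH] //=; case: (boolP (a y)) => ay /=.
  by move=> _; exists [::], y, s.
by case/IH=> s1 [x [s2 [-> ax h]]]; exists (y :: s1), x, s2; rewrite /= (negPf ay).
Qed.

Lemma prefix_sub (T : eqType) (p1 a b : seq T) e g :
  rcons p1 e = a ++ g :: b -> {subset a <= p1}.
Proof.
case/lastP: b => [|b x].
  by rewrite cats1 => /rcons_inj [-> _].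
rewrite -rcons_cons -rcons_cat => /rcons_inj [-> _] f fa; by rewrite mem_cat fa.
Qed.

Lemma pos_before (T : eqType) (p1 p2 q1 q2 : seq T) g e :
  p1 ++ g :: p2 = q1 ++ e :: q2 -> e \notin p1 -> (g \in q1) || (g == e).
Proof.
elim: p1 q1 => [|x p1 IH] [|y q1] /=.
- by case=> -> *.
- by case=> -> *; rewrite in_cons eqxx.
- by case=> -> _; rewrite in_cons eqxx.
- case=> -> eq; rewrite in_cons negb_or => /andP [_ /(IH _ eq)].
  by rewrite in_cons; case/orP=> ->; rewrite ?orbT.
Qed.

Section Walks2.
Variables (V E : finType) (src dst : E -> V).
Lemma stay_all (A : {set V}) x y p : walk src dst x y p -> x \in A ->
  all (fun f => f \notin delta src dst A) p -> all (fun f => dst f \in A) p.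
Proof.
elim: p x => [|e p IH] x //=.
case/andP=> /eqP <- w xA /andP [de al].
have dA : dst e \in A by move: de; rewrite inE xA /= negbK.
by rewrite dA (IH _ w dA al).
Qed.
End Walks2.

End A.
Import A.

Module B.

Section Cuts.
Variables (V E : finType) (src dst : E -> V) (s t : V).
Local Notation walk := (walk src dst).
Local Notation delta := (delta src dst).
Local Notation stpath := (is_stpath src dst s t).
Local Notation cut := (is_cut src dst s t).
Local Notation mincut := (is_min_cut src dst s t).
Local Notation le := (cut_le src dst s t).

Lemma walk_to_tE x p : walk_to_t src dst t x p = walk x t p.
Proof. by elim: p x => [|e p IH] x //=; rewrite IH. Qed.

Lemma stpathE p : stpath p = walk s t p && uniq (s :: map dst p).
Proof. by rewrite /is_stpath walk_to_tE. Qed.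

Lemma stpath_uniq p : stpath p -> uniq p.
Proof. by rewrite stpathE => /andP [_ /= /andP [_ /map_uniq]]. Qed.

Definition reach (X : {set E}) : {set V} :=
  [set v | asbool (exists p, walk s v p && all (fun f => f \notin X) p)].

Lemma reachP (X : {set E}) v : reflect (exists p, walk s v p && all (fun f => f \notin X) p) (v \in reach X).
Proof. rewrite inE; exact: asboolP. Qed.

Lemma reach_s (X : {set E}) : s \in reach X.
Proof. by apply/reachP; exists [::]; rewrite /= eqxx. Qed.

Lemma reach_ext (X : {set E}) e : src e \in reach X -> e \notin X -> dst e \in reach X.
Proof.
case/reachP=> p /andP [w a] eX; apply/reachP; exists (rcons p e).
by rewrite walk_rcons // all_rcons eX.
Qed.

Lemma cut_nreach (X : {set E}) : cut X -> t \notin reach X.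
Proof.
move=> cX; apply/negP => /reachP [p /andP [w a]].
have [q [wq uq sq]] := shorten w.
have [f fq fX] : exists2 f, f \in q & f \in X by apply: cX; rewrite stpathE wq.
by move/allP: a => /(_ f (mem_subseq sq fq)); rewrite fX.
Qed.

Lemma delta_cut (A : {set V}) : s \in A -> t \notin A -> cut (delta A).
Proof. move=> sA tA p; rewrite stpathE => /andP [w _]; exact: exit_delta w sA tA. Qed.

Lemma reach_delta (A : {set V}) : s \in A -> reach (delta A) \subset A.
Proof. move=> sA; apply/subsetP => v /reachP [p /andP [w a]]; exact: stay w sA a. Qed.

Lemma mincut_delta (X : {set E}) : mincut X -> X = delta (reach X).
Proof.
case=> cX mX; apply/eqP; rewrite eq_sym eqEcard; apply/andP; split.
  apply/subsetP => e; rewrite inE => /andP [se de].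
  by apply: contraR de => eX; apply: reach_ext.
apply: mX; apply: delta_cut; [exact: reach_s | exact: cut_nreach].
Qed.

Lemma le_delta (X : {set E}) (A : {set V}) : s \in A -> t \notin A -> reach X \subset A -> le X (delta A).
Proof.
move=> sA tA RA p; rewrite stpathE => /andP [w _].
have [p1 [e [p2 [eqp se de al]]]] := exit w sA tA; subst p.
case: (boolP (has (mem X) (rcons p1 e))) => hX.
  have [a [g [b [eq gX na]]]] := split_first hX.
  exists a, g, (b ++ p2); split => //.
    by rewrite -cat_rcons eq -catA.
  apply/allP => f /(prefix_sub eq) fp; move/allP: al => /(_ f fp) dA.
  by rewrite inE dA andbF.
exfalso; move/negP: de; apply; apply: (subsetP RA); apply/reachP.
exists (rcons p1 e); rewrite walk_rcons; last by case: (walk_split1 w).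
apply/andP; split=> //; apply/allP => f fp; apply: contra hX => fX; apply/hasP; by exists f.
Qed.

Lemma crit (X : {set E}) e : mincut X -> e \in X ->
  exists q, [/\ stpath q, e \in q & forall f, f \in q -> f \in X -> f = e].
Proof.
case=> cX mX eX.
have ncut : ~ cut (X :\ e).
  move/mX; rewrite (cardsD1 e X) eX; lia.
have [q hq] : exists q, ~ (stpath q -> exists2 f, f \in q & f \in X :\ e).
  by apply: not_all_ex_not.
have sq : stpath q by apply: NNPP => h; apply: hq => /h.
have un : forall f, f \in q -> f \in X -> f = e.
  move=> f fq fX; apply/eqP; apply: NNPP => /negP ne.
  by apply: hq => _; exists f => //; rewrite !inE ne fX.
exists q; split => //.
by have [f fq fX] := cX q sq; rewrite -(un f fq fX).
Qed.

Lemma submod (A B : {set V}) :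
  #|delta (A :|: B)| + #|delta (A :&: B)| <= #|delta A| + #|delta B|.
Proof.
rewrite /A.delta !cardsum -!big_split /=; apply: leq_sum => e _; rewrite !inE.
by case: (src e \in A); case: (src e \in B); case: (dst e \in A); case: (dst e \in B).
Qed.

Lemma mincut_join (X Y : {set E}) : mincut X -> mincut Y ->
  mincut (delta (reach X :|: reach Y)) /\ mincut (delta (reach X :&: reach Y)).
Proof.
move=> mX mY; have [cX lX] := mX; have [cY lY] := mY.
have tX := cut_nreach cX; have tY := cut_nreach cY.
have c1 : cut (delta (reach X :|: reach Y)).
  by apply: delta_cut; rewrite in_setU ?reach_s // negb_or tX tY.
have c2 : cut (delta (reach X :&: reach Y)).
  by apply: delta_cut; rewrite in_setI ?reach_s // negb_and tX.
have h1 := lX _ c1; have h2 := lY _ c2; have h3 := lX _ cY; have h4 := lY _ cX.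
have := submod (reach X) (reach Y); rewrite -(mincut_delta mX) -(mincut_delta mY) => h.
split; split => // C cC; have := lX _ cC; lia.
Qed.

Lemma le_reach (X Y : {set E}) : mincut X -> mincut Y -> le X Y -> reach X \subset reach Y.
Proof.
move=> mX mY lXY.
set A := reach X :&: reach Y.
have sA : s \in A by rewrite in_setI !reach_s.
have [_ mZ] := mincut_join mX mY.
have eXd := mincut_delta mX; have eYd := mincut_delta mY.
suff ZX : delta A \subset X.
  have eZ : delta A = X.
    apply/eqP; rewrite eqEcard ZX /=; case: mX => _; apply; exact: mZ.1.
  have := reach_delta sA; rewrite eZ => h; apply: subset_trans h _; exact: subsetIr.
apply/subsetP => e eZ; have := eZ; rewrite inE => /andP [sAe dAe].
rewrite eXd inE; move: sAe; rewrite inE => /andP [-> sY] /=.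
apply/negP => dX.
have dY : dst e \notin reach Y by move: dAe; rewrite inE dX.
have eY : e \in Y by rewrite eYd inE sY dY.
have enX : e \notin X by rewrite eXd inE dX andbF.
have [q [sq eq un]] := crit mZ eZ.
have uq := stpath_uniq sq.
have wq : walk s t q by move: sq; rewrite stpathE => /andP [].
case/splitPr: eq wq uq sq un => q1 q2 wq uq sq un.
have [p1 [g [p2 [eqp gX nY]]]] := lXY _ sq.
have enp1 : e \notin p1 by apply/negP => /(allP nY); rewrite eY.
have := pos_before (esym eqp) enp1; case/orP => [gq1|/eqP ge]; last by rewrite -ge gX in enX.
have enq1 : e \notin q1.
  by move: uq; rewrite cat_uniq => /and3P [_ /hasPn /(_ e (mem_head _ _)) ].
have [w1 _] := walk_split1 wq.
have al : all (fun f => f \notin delta A) q1.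
  apply/allP => f fq; apply/negP => fZ.
  have := un f; rewrite mem_cat fq => /(_ isT fZ) fe; by rewrite -fe fq in enq1.
have := allP (stay_all w1 sA al) g gq1; rewrite in_setI => /andP [dgX _].
move: dgX; have : g \in delta (reach X) by rewrite -eXd.
by rewrite !inE => /andP [_ /negP h] /h.
Qed.

End Cuts.

End B.
Import B.

Module C.

Section Flow.
Variables (V E : finType) (src dst : E -> V) (s t : V).
Hypothesis st : s != t.
Local Notation walk := (walk src dst).
Local Notation delta := (delta src dst).
Local Notation stpath := (is_stpath src dst s t).
Local Notation cut := (is_cut src dst s t).

Definition cnt (F : {set E}) (Q : pred E) := #|[set e in F | Q e]|.
Definition out (F : {set E}) v := cnt F (fun e => src e == v).
Definition inn (F : {set E}) v := cnt F (fun e => dst e == v).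
Definition flow (F : {set E}) k :=
  (forall v, v != s -> v != t -> out F v = inn F v) /\ out F s = inn F s + k.

Lemma sum_ind (b : bool) (x : V) (R : {set V}) :
  \sum_(v in R) (b && (x == v) : nat) = b && (x \in R).
Proof.
case: b => /=; last by rewrite big1.
case: (boolP (x \in R)) => xR.
  rewrite (bigD1 x) //= eqxx big1 // => v /andP [_]; rewrite eq_sym => /negPf ->; done.
rewrite big1 // => v vR; case: eqP => // ex; by rewrite ex vR in xR.
Qed.

Lemma sum_out (F : {set E}) (R : {set V}) : \sum_(v in R) out F v = cnt F (fun e => src e \in R).
Proof.
rewrite /out /cnt cardsum.
under eq_bigr do rewrite cardsum.
rewrite exchange_big; apply: eq_bigr => e _; by rewrite sum_ind.
Qed.

Lemma sum_inn (F : {set E}) (R : {set V}) : \sum_(v in R) inn F v = cnt F (fun e => dst e \in R).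
Proof.
rewrite /inn /cnt cardsum.
under eq_bigr do rewrite cardsum.
rewrite exchange_big; apply: eq_bigr => e _; by rewrite sum_ind.
Qed.

Lemma sum_excess (F : {set E}) k (R : {set V}) : flow F k -> s \in R -> t \notin R ->
  \sum_(v in R) out F v = \sum_(v in R) inn F v + k.
Proof.
move=> [fc fs] sR tR; rewrite (bigD1 s) //= [\sum_(v in R) inn F v](bigD1 s) //= fs.
rewrite (eq_bigr (fun v => inn F v)); first by rewrite addnAC.
move=> v /andP [vR vs]; apply: fc => //; apply: contraNneq tR => <-; done.
Qed.

Lemma cnt_rem (F : {set E}) (p : seq E) (Q : pred E) : uniq p -> all (mem F) p ->
  cnt (F :\: [set e | e \in p]) Q + count Q p = cnt F Q.
Proof.
move=> u al; rewrite -card_seq // /cnt !cardsum -big_split; apply: eq_bigr => e _.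
rewrite !inE; case: (boolP (e \in p)) => ep /=; last by rewrite addn0.
by have /= -> := allP al e ep; case: (Q e).
Qed.

Lemma flow_path (F : {set E}) k : flow F k.+1 -> exists p, stpath p && all (mem F) p.
Proof.
move=> fl.
pose R := [set v | asbool (exists p, walk s v p && all (mem F) p)].
have sR : s \in R by rewrite inE; apply/asboolP; exists [::]; rewrite /= eqxx.
case: (boolP (t \in R)) => tR.
  move: tR; rewrite inE => /asboolP [p /andP [w a]].
  have [q [wq uq sq]] := shorten w.
  exists q; rewrite stpathE wq uq /=; apply/allP => e eq.
  exact: (allP a e (mem_subseq sq eq)).
exfalso.
have := sum_excess fl sR tR; rewrite sum_out sum_inn.
have : cnt F (fun e => src e \in R) <= cnt F (fun e => dst e \in R).
  apply: subset_leq_card; apply/subsetP => e; rewrite !inE => /andP [eF].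
  case/asboolP=> p /andP [w a]; rewrite eF /=; apply/asboolP.
  exists (rcons p e); rewrite walk_rcons // all_rcons a andbT; done.
lia.
Qed.

Lemma decomp k : forall F, flow F k -> exists Q : seq (seq E),
  [/\ size Q = k, all stpath Q, pairwise (fun p q : seq E => [disjoint p & q]) Q &
      all (fun p => all (mem F) p) Q].
Proof.
elim: k => [|k IH] F fl; first by exists [::].
have [p /andP [sp pF]] := flow_path fl.
have up := stpath_uniq sp.
have [w u] : walk s t p /\ uniq (s :: map dst p) by move: sp; rewrite stpathE => /andP.
pose F' := F :\: [set e | e \in p].
have fl' : flow F' k.
  have ho v := cnt_rem (fun e => src e == v) up pF.
  have hi v := cnt_rem (fun e => dst e == v) up pF.
  case: fl => fc fs; split.
    move=> v vs vt; have := ho v; have := hi v; have := fc v vs vt.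
    rewrite /out /inn (count_src v w u) (count_dst v u) in_cons (negPf vs) vt /=.
    rewrite /F' /cnt andbT => h1 h2 h3; apply/eqP; by rewrite -(eqn_add2r (v \in [seq dst i | i <- p])) h2 h3 h1.
  have := ho s; have := hi s; move: fs.
  rewrite /out /inn (count_src s w u) (count_dst s u) mem_head st /=.
  move: u => /= /andP [/negPf -> _]; rewrite /F' /cnt /= ?addn0; lia.
have [Q [sQ aQ pQ fQ]] := IH _ fl'.
exists (p :: Q); split => /=.
- by rewrite sQ.
- by rewrite sp aQ.
- rewrite pQ andbT; apply/allP => q qQ; rewrite disjoint_has; apply/hasP => [[e ep eq]].
  by have := allP (allP fQ q qQ) e eq; rewrite /= /F' !inE ep.
- rewrite pF /=; apply/allP => q qQ; apply/allP => e eq.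
  by have := allP (allP fQ q qQ) e eq; rewrite /= /F' !inE => /andP [].
Qed.

(* residual graph *)
Definition rsrc (a : E * bool) := if a.2 then src a.1 else dst a.1.
Definition rdst (a : E * bool) := if a.2 then dst a.1 else src a.1.
Definition okr (F : {set E}) (a : E * bool) := if a.2 then a.1 \notin F else a.1 \in F.

Lemma sum_pair (f : E * bool -> nat) : \sum_a f a = \sum_e (f (e, true) + f (e, false)).
Proof.
transitivity (\sum_(a : E * bool) f (a.1, a.2)); first by apply: eq_bigr => [[]].
rewrite -(pair_bigA _ (fun e b => f (e, b))); apply: eq_bigr => e _; by rewrite big_bool.
Qed.

Lemma cnt_aug (F Fw Bw : {set E}) (Q : pred E) : (forall e, e \in Fw -> e \notin F) -> Bw \subset F ->
  cnt ((F :|: Fw) :\: Bw) Q + cnt Bw Q = cnt F Q + cnt Fw Q.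
Proof.
move=> dF /subsetP sB; rewrite /cnt !cardsum -!big_split; apply: eq_bigr => e _.
rewrite !inE; case: (boolP (e \in Bw)) => eB.
  have eF := sB e eB; have eW : e \notin Fw by apply: contraL eF => /dF.
  by rewrite eF (negPf eW) /=; case: (Q e).
rewrite /=; case: (boolP (e \in Fw)) => eW; [rewrite (negPf (dF e eW)) | ];
  rewrite /= ?orbF ?orbT ?addn0; by case: (Q e); case: (e \in F).
Qed.

Lemma augment (F : {set E}) k r : flow F k -> A.walk rsrc rdst s t r -> uniq (s :: map rdst r) ->
  all (okr F) r -> exists F', flow F' k.+1.
Proof.
move=> [fc fs] w u ok.
have ur : uniq r by move: u => /= /andP [_ /map_uniq].
pose Fw := [set e | (e, true) \in r]; pose Bw := [set e | (e, false) \in r].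
have dF : forall e, e \in Fw -> e \notin F.
  by move=> e; rewrite inE => /(allP ok).
have sB : Bw \subset F by apply/subsetP => e; rewrite inE => /(allP ok).
have cs v : count (fun a => rsrc a == v) r =
            cnt Fw (fun e => src e == v) + cnt Bw (fun e => dst e == v).
  rewrite -card_seq // /cnt !cardsum sum_pair -big_split; apply: eq_bigr => e _.
  by rewrite !inE.
have cd v : count (fun a => rdst a == v) r =
            cnt Fw (fun e => dst e == v) + cnt Bw (fun e => src e == v).
  rewrite -card_seq // /cnt !cardsum sum_pair -big_split; apply: eq_bigr => e _.
  by rewrite !inE.
exists ((F :|: Fw) :\: Bw); split.
  move=> v vs vt.
  have := cnt_aug (fun e => src e == v) dF sB; have := cnt_aug (fun e => dst e == v) dF sB.
  have := cs v; have := cd v; have := fc v vs vt.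
  rewrite /out /inn (count_src v w u) (count_dst v u) in_cons (negPf vs) vt /=.
  lia.
have := cnt_aug (fun e => src e == s) dF sB; have := cnt_aug (fun e => dst e == s) dF sB.
have := cs s; have := cd s; move: fs.
rewrite /out /inn (count_src s w u) (count_dst s u) mem_head st /=.
move: u => /= /andP [/negPf -> _]; lia.
Qed.

Lemma flow_cut (F : {set E}) k : flow F k ->
  ~ (exists r, A.walk rsrc rdst s t r && all (okr F) r) -> exists C, cut C /\ #|C| <= k.
Proof.
move=> fl nr.
pose R := [set v | asbool (exists r, A.walk rsrc rdst s v r && all (okr F) r)].
have sR : s \in R by rewrite inE; apply/asboolP; exists [::]; rewrite /= eqxx.
have tR : t \notin R by rewrite inE; apply/asboolP.
have ext a : rsrc a \in R -> okr F a -> rdst a \in R.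
  rewrite !inE => /asboolP [r /andP [w a1]] oa; apply/asboolP; exists (rcons r a).
  by rewrite walk_rcons // all_rcons oa a1.
clearbody R.
exists (delta R); split; first exact: delta_cut.
have := sum_excess fl sR tR; rewrite sum_out sum_inn.
suff : #|delta R| + cnt F (fun e => dst e \in R) <= cnt F (fun e => src e \in R) by lia.
rewrite /A.delta /cnt !cardsum -big_split; apply: leq_sum => e _; rewrite ?inE.
case: (boolP (src e \in R)) => sRe; case: (boolP (dst e \in R)) => dRe //=.
- case: (boolP (e \in F)) => //= eF.
  by have := ext (e, true) sRe eF; rewrite /= (negPf dRe).
- case: (boolP (e \in F)) => //= eF.
  by have := ext (e, false) dRe eF; rewrite /= (negPf sRe).
Qed.

Lemma menger P : max_path_packing src dst s t P -> exists C, cut C /\ #|C| <= size P.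
Proof.
case=> _ mP.
pose S := [pred k | asbool (exists F, flow F k)].
have ex0 : exists k, S k.
  exists 0; rewrite /S /=; apply/asboolP; exists set0.
  have c0 Q : cnt set0 Q = 0 by rewrite /cnt cardsum big1 // => e _; rewrite inE.
  by split => [v _ _|]; rewrite /out /inn !c0.
have ub : forall k, S k -> k <= #|E|.
  move=> k /asboolP [F [_ fs]]; apply: (leq_trans _ (max_card [set e in F | src e == s])).
  move: fs; rewrite /out /cnt => ->; exact: leq_addl.
case: (ex_maxnP ex0 ub) => k /asboolP [F fl] mx.
have [Q [sQ aQ pQ _]] := decomp fl.
have kP : k <= size P by rewrite -sQ; apply: mP; rewrite /edge_disjoint_paths aQ pQ.
have nr : ~ (exists r, A.walk rsrc rdst s t r && all (okr F) r).
  case=> r /andP [w ok]; have [q [wq uq sq]] := shorten w.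
  have okq : all (okr F) q by apply/allP => a aq; exact: (allP ok a (mem_subseq sq aq)).
  have [F' fl'] := augment fl wq uq okq.
  have := mx k.+1; rewrite /S /= => /(_ (introT (asboolP _) (ex_intro _ F' fl'))); lia.
have [C [cC lC]] := flow_cut fl nr.
by exists C; split => //; apply: leq_trans kP.
Qed.

End Flow.

End C.
Import C.

Module D.

Definition posprop (E : finType) (W : {set E}) (p : seq E) i :=
  i < size p /\ forall f, f \in p -> (f \in W) = (index f p == i).

Section Lattice.
Variables (V E : finType) (src dst : E -> V) (s t : V) (P : seq (seq E)).
Hypothesis st : s != t.
Hypothesis mP : max_path_packing src dst s t P.
Local Notation walk := (walk src dst).
Local Notation delta := (delta src dst).
Local Notation stpath := (is_stpath src dst s t).
Local Notation cut := (is_cut src dst s t).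
Local Notation mincut := (is_min_cut src dst s t).
Local Notation le := (cut_le src dst s t).
Local Notation reach := (reach src dst s).

Lemma P_st p : p \in P -> stpath p.
Proof. by case: mP => /andP [/allP h _] _; apply: h. Qed.

Lemma P_pw : pairwise (fun p q : seq E => [disjoint p & q]) P.
Proof. by case: mP => /andP [_ h] _. Qed.

Lemma P_unique p q e : p \in P -> q \in P -> e \in p -> e \in q -> p = q.
Proof.
have := P_pw; elim: P => [|x P' IH] //; rewrite pairwise_cons => /andP [ax pw].
rewrite !in_cons => /orP [/eqP ->|pP] /orP [/eqP ->|qP] ep eq //.
- have := allP ax q qP; rewrite disjoint_has => /hasP []; by exists e.
- have := allP ax p pP; rewrite disjoint_has => /hasP []; by exists e.
- exact: IH.
Qed.

Lemma sum_cover (X : {set E}) Q : pairwise (fun p q : seq E => [disjoint p & q]) Q ->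
  #|[set e in X | has (fun p => e \in p) Q]| = \sum_(p <- Q) #|[set e in X | e \in p]|.
Proof.
elim: Q => [|x Q IH].
  by rewrite big_nil cardsum big1 // => e _; rewrite /= andbF.
rewrite pairwise_cons big_cons => /andP [ax pw]; rewrite -(IH pw) !cardsum -big_split.
apply: eq_bigr => e _ /=; case: (e \in X) => //=; case: (boolP (e \in x)) => ex //=.
case: (boolP (has _ Q)) => // /hasP [q qQ eq].
have := allP ax q qQ; rewrite disjoint_has => /hasP []; by exists e.
Qed.

Lemma sum_ones (Q : seq (seq E)) (f : seq E -> nat) : \sum_(p <- Q) f p <= size Q ->
  (forall p, p \in Q -> 0 < f p) -> (forall p, p \in Q -> f p = 1) /\ \sum_(p <- Q) f p = size Q.
Proof.
elim: Q => [|x Q IH] /=; first by rewrite big_nil.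
rewrite big_cons => le1 pos.
have fx := pos x (mem_head _ _).
have hQ : forall p, p \in Q -> 0 < f p by move=> p pQ; apply: pos; rewrite in_cons pQ orbT.
have lb : size Q <= \sum_(p <- Q) f p.
  rewrite -(sum1_size Q) big_seq_cond [X in _ <= X]big_seq_cond; apply: leq_sum => p.
  by rewrite andbT => /hQ.
have [h1 h2] := IH (ltac:(lia)) hQ.
split; last by lia.
move=> p; rewrite in_cons => /orP [/eqP ->|]; [lia | exact: h1].
Qed.

Lemma mincut_small X : mincut X -> #|X| <= size P.
Proof. case=> _ mX; have [C [cC lC]] := menger st mP; exact: leq_trans (mX _ cC) lC. Qed.

Lemma struct X : mincut X ->
  (forall p, p \in P -> #|[set e in X | e \in p]| = 1) /\
  (forall e, e \in X -> has (fun p => e \in p) P).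
Proof.
move=> mX; have [cX _] := mX.
have sc := sum_cover X P_pw.
have le1 : #|[set e in X | has (fun p => e \in p) P]| <= #|X|.
  by apply: subset_leq_card; apply/subsetP => e; rewrite inE => /andP [].
have hs := mincut_small mX.
have pos : forall p, p \in P -> 0 < #|[set e in X | e \in p]|.
  move=> p pP; have [e ep eX] := cX p (P_st pP).
  by apply/card_gt0P; exists e; rewrite inE eX.
have hsum : \sum_(p <- P) #|[set e in X | e \in p]| <= size P by rewrite -sc; lia.
have [h1 h2] := sum_ones (f := fun p => #|[set e in X | e \in p]|) hsum pos.
split => // e eX.
have eq : [set e in X | has (fun p => e \in p) P] = X.
  apply/eqP; rewrite eqEcard; apply/andP; split; last by lia.
  by apply/subsetP => f; rewrite inE => /andP [].
by move: eX; rewrite -{1}eq inE => /andP [].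
Qed.

Lemma pos X p : mincut X -> p \in P -> exists i, posprop X p i.
Proof.
move=> mX pP; have [h _] := struct mX; have := h p pP.
move/eqP/cards1P=> [x ex].
have : x \in [set e in X | e \in p] by rewrite ex inE.
rewrite inE => /andP [xX xp].
exists (index x p); split; first by rewrite index_mem.
move=> f fp; apply/idP/eqP => [fX|ei].
  have : f \in [set e in X | e \in p] by rewrite inE fX.
  by rewrite ex inE => /eqP ->.
by rewrite -(nth_index x fp) ei nth_index.
Qed.

Lemma Smax_has p f (Z : {set E}) : p \in P -> f \in p ->
  (f \in S_max P Z) = [&& f \in Z & all (fun g => (g \in Z) ==> (index g p <= index f p)) p].
Proof.
move=> pP fp; rewrite inE; apply/hasP/idP => [[q qP /and3P [fq fZ al]]|/andP [fZ al]].
  by have eq := P_unique pP qP fp fq; subst q; rewrite fZ.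
by exists p => //; rewrite fp fZ.
Qed.

Lemma Smin_has p f (Z : {set E}) : p \in P -> f \in p ->
  (f \in S_min P Z) = [&& f \in Z & all (fun g => (g \in Z) ==> (index f p <= index g p)) p].
Proof.
move=> pP fp; rewrite inE; apply/hasP/idP => [[q qP /and3P [fq fZ al]]|/andP [fZ al]].
  by have eq := P_unique pP qP fp fq; subst q; rewrite fZ.
by exists p => //; rewrite fp fZ.
Qed.

Lemma KLmax (W1 W2 : {set E}) p i1 i2 : p \in P -> posprop W1 p i1 -> posprop W2 p i2 ->
  posprop (S_max P (W1 :|: W2)) p (maxn i1 i2).
Proof.
move=> pP [s1 h1] [s2 h2]; have up := stpath_uniq (P_st pP).
split; first by rewrite gtn_max s1 s2.
move=> f fp; rewrite (Smax_has _ pP fp) in_setU h1 // h2 //.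
have [x0 _] : exists x0 : E, true by exists f.
have n1 := mem_nth x0 s1; have n2 := mem_nth x0 s2.
have i1e := index_uniq x0 s1 up; have i2e := index_uniq x0 s2 up.
apply/idP/eqP.
  case/andP=> hf /allP al.
  have := al _ n1; rewrite in_setU h1 // i1e eqxx /=.
  have := al _ n2; rewrite in_setU h2 // i2e eqxx orbT /=.
  move: hf; case/orP => /eqP; lia.
move=> ef; apply/andP; split; first by case/orP: (leq_total i1 i2) => h; apply/orP; [right|left]; apply/eqP; lia.
apply/allP => g gp; rewrite in_setU h1 // h2 //; apply/implyP; case/orP => /eqP; lia.
Qed.

Lemma KLmin (W1 W2 : {set E}) p i1 i2 : p \in P -> posprop W1 p i1 -> posprop W2 p i2 ->
  posprop (S_min P (W1 :|: W2)) p (minn i1 i2).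
Proof.
move=> pP [s1 h1] [s2 h2]; have up := stpath_uniq (P_st pP).
split; first by rewrite gtn_min s1 s2 orbT.
move=> f fp; rewrite (Smin_has _ pP fp) in_setU h1 // h2 //.
have [x0 _] : exists x0 : E, true by exists f.
have n1 := mem_nth x0 s1; have n2 := mem_nth x0 s2.
have i1e := index_uniq x0 s1 up; have i2e := index_uniq x0 s2 up.
apply/idP/eqP.
  case/andP=> hf /allP al.
  have := al _ n1; rewrite in_setU h1 // i1e eqxx /=.
  have := al _ n2; rewrite in_setU h2 // i2e eqxx orbT /=.
  move: hf; case/orP => /eqP; lia.
move=> ef; apply/andP; split; first by case/orP: (leq_total i1 i2) => h; apply/orP; [left|right]; apply/eqP; lia.
apply/allP => g gp; rewrite in_setU h1 // h2 //; apply/implyP; case/orP => /eqP; lia.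
Qed.


Lemma suffix_index (T : eqType) (q1 q2 : seq T) f : uniq (q1 ++ q2) -> f \in q2 ->
  size q1 <= index f (q1 ++ q2).
Proof.
rewrite cat_uniq index_cat => /and3P [_ /hasPn h _] fq.
by have /negPf -> := h f fq; exact: leq_addr.
Qed.

Lemma prefix_index (T : eqType) (q1 q2 : seq T) e f : f \in rcons q1 e ->
  index f (q1 ++ e :: q2) <= size q1.
Proof.
by move=> fr; rewrite -cat_rcons index_cat fr -ltnS -(size_rcons q1 e) index_mem.
Qed.

Lemma le_pos X Y p i j : le X Y -> stpath p -> posprop X p i -> posprop Y p j -> i <= j.
Proof.
move=> lXY sp [si hi] [sj hj]; have up := stpath_uniq sp.
have [p1 [g [p2 [eqp gX nY]]]] := lXY p sp.
have gp : g \in p by rewrite eqp mem_cat mem_head orbT.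
have ig : index g p = i by apply/eqP; rewrite -hi.
have gp1 : g \notin p1.
  by move: up; rewrite eqp cat_uniq => /and3P [_ /hasPn /(_ g (mem_head _ _)) ].
have ig2 : index g p = size p1 by rewrite eqp index_cat (negPf gp1) /= eqxx addn0.
rewrite -ig ig2 leqNgt; apply/negP => jl.
have hp := mem_nth g sj.
have hY : nth g p j \in Y by rewrite hj // index_uniq.
have : nth g p j \in p1 by rewrite eqp nth_cat jl mem_nth.
by move/(allP nY); rewrite hY.
Qed.

Lemma split_at p j (x0 : E) : j < size p -> uniq p ->
  exists q1 q2, p = q1 ++ nth x0 p j :: q2 /\ size q1 = j.
Proof.
move=> sj up; have hp := mem_nth x0 sj; have ij := index_uniq x0 sj up.
move: hp ij up; set e := nth x0 p j; clearbody e => hp.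
case/splitPr: hp => q1 q2 ij up; exists q1, q2; split => //.
move: up ij; rewrite cat_uniq index_cat => /and3P [_ /hasPn /(_ _ (mem_head _ _)) /negPf -> _].
by rewrite /= eqxx addn0.
Qed.

Lemma join_eq X Y : mincut X -> mincut Y ->
  S_max P (X :|: Y) = delta (reach X :|: reach Y).
Proof.
move=> mX mY; set A := reach X :|: reach Y.
have [mJ _] := mincut_join mX mY.
have sA : s \in A by rewrite in_setU reach_s.
have tX := cut_nreach mX.1; have tY := cut_nreach mY.1.
have tA : t \notin A by rewrite in_setU negb_or tX tY.
apply/setP => e; case: (boolP (has (fun p => e \in p) P)) => [/hasP [p pP ep]|nh]; last first.
  apply/idP/idP.
    rewrite inE => /hasP [q qP /and3P [eq _ _]]; case/hasP: nh; by exists q.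
  by move/((struct mJ).2) => h; rewrite h in nh.
have [x px] := pos mX pP; have [y py] := pos mY pP; have [j pj] := pos mJ pP.
have pm := KLmax pP px py.
suff ej : j = maxn x y by rewrite pm.2 // pj.2 // ej.
have sp := P_st pP; have up := stpath_uniq sp.
have w : walk s t p by move: sp; rewrite stpathE => /andP [].
apply/eqP; rewrite eqn_leq; apply/andP; split; last first.
  rewrite geq_max; apply/andP; split.
    apply: (le_pos _ sp px pj); apply: le_delta => //; exact: subsetUl.
  apply: (le_pos _ sp py pj); apply: le_delta => //; exact: subsetUr.
rewrite leqNgt; apply/negP => jl.
have [x0 _] : exists x0 : E, true by exists e.
have [q1 [q2 [eqp sq1]]] := split_at x0 pj.1 up.
set e' := nth x0 p j in eqp.
have e'p : e' \in p by apply: mem_nth; case: pj.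
have e'J : e' \in delta A by rewrite (pj.2 _ e'p) /e' index_uniq //; case: pj.
have w2 : walk (src e') t (e' :: q2).
  move: w; rewrite eqp => /walk_split [v _] /= /andP [/eqP -> ->]; by rewrite eqxx.
move: e'J; rewrite inE => /andP [/setUP [hX|hY] _].
  have [f fq fX] := exit_delta w2 hX tX.
  rewrite -(mincut_delta mX) in fX.
  have fp : f \in p by rewrite eqp mem_cat fq orbT.
  have := px.2 f fp; rewrite fX => /esym /eqP ifx.
  have := suffix_index (q1 := q1) (q2 := e' :: q2) (f := f) (ltac:(by rewrite -eqp)) fq.
  rewrite -eqp ifx sq1 => h; move: jl; rewrite gtn_max => /andP [l1 _].
  by rewrite ltnNge h in l1.
have [f fq fY] := exit_delta w2 hY tY.
rewrite -(mincut_delta mY) in fY.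
have fp : f \in p by rewrite eqp mem_cat fq orbT.
have := py.2 f fp; rewrite fY => /esym /eqP ify.
have := suffix_index (q1 := q1) (q2 := e' :: q2) (f := f) (ltac:(by rewrite -eqp)) fq.
rewrite -eqp ify sq1 => h; move: jl; rewrite gtn_max => /andP [_ l2].
by rewrite ltnNge h in l2.
Qed.


Lemma le_to X Y : mincut Y -> reach X \subset reach Y -> le X Y.
Proof.
move=> mY sub; have h := le_delta (X := X) (reach_s src dst s Y) (cut_nreach mY.1) sub.
by rewrite -(mincut_delta mY) in h.
Qed.

Lemma meet_eq X Y : mincut X -> mincut Y ->
  S_min P (X :|: Y) = delta (reach X :&: reach Y).
Proof.
move=> mX mY; set A := reach X :&: reach Y.
have [_ mM] := mincut_join mX mY.
have sA : s \in A by rewrite in_setI !reach_s.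
apply/setP => e; case: (boolP (has (fun p => e \in p) P)) => [/hasP [p pP ep]|nh]; last first.
  apply/idP/idP.
    rewrite inE => /hasP [q qP /and3P [eq _ _]]; case/hasP: nh; by exists q.
  by move/((struct mM).2) => h; rewrite h in nh.
have [x px] := pos mX pP; have [y py] := pos mY pP; have [j pj] := pos mM pP.
have pm := KLmin pP px py.
suff ej : j = minn x y by rewrite pm.2 // pj.2 // ej.
have sp := P_st pP; have up := stpath_uniq sp.
have w : walk s t p by move: sp; rewrite stpathE => /andP [].
have rM : reach (delta A) \subset A := reach_delta src dst sA.
apply/eqP; rewrite eqn_leq; apply/andP; split.
  rewrite leq_min; apply/andP; split.
    apply: (le_pos _ sp pj px); apply: le_to => //; apply: subset_trans rM _; exact: subsetIl.
  apply: (le_pos _ sp pj py); apply: le_to => //; apply: subset_trans rM _; exact: subsetIr.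
rewrite leqNgt; apply/negP => jl.
have [x0 _] : exists x0 : E, true by exists e.
have [q1 [q2 [eqp sq1]]] := split_at x0 pj.1 up.
set e' := nth x0 p j in eqp.
have e'p : e' \in p by apply: mem_nth; case: pj.
have e'J : e' \in delta A by rewrite (pj.2 _ e'p) /e' index_uniq //; case: pj.
have w1 : walk s (dst e') (rcons q1 e').
  by apply: walk_rcons; move: w; rewrite eqp => /walk_split1 [].
have small f : f \in rcons q1 e' -> index f p < minn x y.
  move=> fr; have := prefix_index q2 fr; rewrite -eqp sq1 => h; exact: leq_ltn_trans h jl.
have fr_p f : f \in rcons q1 e' -> f \in p.
  by move=> fr; rewrite eqp -cat_rcons mem_cat fr.
have dX : dst e' \in reach X.
  apply/reachP; exists (rcons q1 e'); rewrite w1 /=; apply/allP => f fr.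
  rewrite (px.2 _ (fr_p f fr)); apply/negP => /eqP h; have := small f fr.
  by rewrite h ltnNge geq_minl.
have dY : dst e' \in reach Y.
  apply/reachP; exists (rcons q1 e'); rewrite w1 /=; apply/allP => f fr.
  rewrite (py.2 _ (fr_p f fr)); apply/negP => /eqP h; have := small f fr.
  by rewrite h ltnNge geq_minr.
by move: e'J; rewrite in_delta !in_setI dX dY andbF.
Qed.

End Lattice.

End D.
Import D.


Lemma Scov (E : finType) (P : seq (seq E)) (Z : {set E}) e :
  (e \in S_max P Z) || (e \in S_min P Z) -> has (fun p => e \in p) P.
Proof.
by rewrite !inE => /orP [] /hasP [q qP /and3P [eq _ _]]; apply/hasP; exists q.
Qed.

Theorem lemma2 (V E : finType) (src dst : E -> V) (s t : V) (k : nat)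
  (P : seq (seq E)) :
  s != t -> 0 < k -> max_path_packing src dst s t P ->
  let U := in_Ulr src dst s t (k := k) in
  let le := tuple_le src dst s t (k := k) in
  let join := tuple_join P (k := k) in
  let meet := tuple_meet P (k := k) in
  (* (U, le) is a partial order *)
      (forall C, U C -> le C C) /\
      (forall C1 C2, U C1 -> U C2 -> le C1 C2 -> le C2 C1 -> C1 = C2) /\
      (forall C1 C2 C3, U C1 -> U C2 -> U C3 ->
         le C1 C2 -> le C2 C3 -> le C1 C3) /\
      (* join is the least upper bound *)
      (forall C1 C2, U C1 -> U C2 ->
         [/\ U (join C1 C2), le C1 (join C1 C2), le C2 (join C1 C2) &
             forall D, U D -> le C1 D -> le C2 D -> le (join C1 C2) D]) /\
      (* meet is the greatest lower bound *)
      (forall C1 C2, U C1 -> U C2 ->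
         [/\ U (meet C1 C2), le (meet C1 C2) C1, le (meet C1 C2) C2 &
             forall D, U D -> le D C1 -> le D C2 -> le D (meet C1 C2)]) /\
      (* distributivity *)
      (forall C1 C2 C3, U C1 -> U C2 -> U C3 ->
         meet C1 (join C2 C3) = join (meet C1 C2) (meet C1 C3)).
Proof.
move=> st k0 mP; cbv zeta.
rewrite /in_Ulr /tuple_le.
split.
  move=> C [mC _] i; apply: le_to (mC i) _; exact: subxx.
split.
  move=> C1 C2 [m1 _] [m2 _] l12 l21; apply/ffunP => i.
  have h1 := le_reach (m1 i) (m2 i) (l12 i); have h2 := le_reach (m2 i) (m1 i) (l21 i).
  have er : reach src dst s (C1 i) = reach src dst s (C2 i) by apply/eqP; rewrite eqEsubset h1 h2.
  by rewrite (mincut_delta (m1 i)) (mincut_delta (m2 i)) er.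
split.
  move=> C1 C2 C3 [m1 _] [m2 _] [m3 _] l12 l23 i; apply: le_to (m3 i) _.
  exact: subset_trans (le_reach (m1 i) (m2 i) (l12 i)) (le_reach (m2 i) (m3 i) (l23 i)).
split.
  move=> C1 C2 [m1 c1] [m2 c2].
  have jE i : tuple_join P C1 C2 i = A.delta src dst (reach src dst s (C1 i) :|: reach src dst s (C2 i)).
    by rewrite ffunE (join_eq st mP (m1 i) (m2 i)).
  have sA i : s \in reach src dst s (C1 i) :|: reach src dst s (C2 i) by rewrite in_setU reach_s.
  have tA i : t \notin reach src dst s (C1 i) :|: reach src dst s (C2 i).
    by rewrite in_setU negb_or (cut_nreach (m1 i).1) (cut_nreach (m2 i).1).
  split.
  - split => [i|i j lij]; rewrite ?jE; first exact: (mincut_join (m1 i) (m2 i)).1.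
    apply: le_delta (sA j) (tA j) _.
    apply: subset_trans (reach_delta src dst (sA i)) _.
    by apply: setUSS; apply: le_reach; [exact: m1 | exact: m1 | exact: c1 | exact: m2 | exact: m2 | exact: c2].
  - move=> i; rewrite jE; apply: le_delta (sA i) (tA i) _; exact: subsetUl.
  - move=> i; rewrite jE; apply: le_delta (sA i) (tA i) _; exact: subsetUr.
  - move=> D [mD _] l1 l2 i; rewrite jE; apply: le_to (mD i) _.
    apply: subset_trans (reach_delta src dst (sA i)) _.
    by rewrite subUset (le_reach (m1 i) (mD i) (l1 i)) (le_reach (m2 i) (mD i) (l2 i)).
split.
  move=> C1 C2 [m1 c1] [m2 c2].
  have jE i : tuple_meet P C1 C2 i = A.delta src dst (reach src dst s (C1 i) :&: reach src dst s (C2 i)).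
    by rewrite ffunE (meet_eq st mP (m1 i) (m2 i)).
  have sA i : s \in reach src dst s (C1 i) :&: reach src dst s (C2 i) by rewrite in_setI !reach_s.
  have tA i : t \notin reach src dst s (C1 i) :&: reach src dst s (C2 i).
    by rewrite in_setI negb_and (cut_nreach (m1 i).1).
  split.
  - split => [i|i j lij]; rewrite ?jE; first exact: (mincut_join (m1 i) (m2 i)).2.
    apply: le_delta (sA j) (tA j) _.
    apply: subset_trans (reach_delta src dst (sA i)) _.
    by apply: setISS; apply: le_reach; [exact: m1 | exact: m1 | exact: c1 | exact: m2 | exact: m2 | exact: c2].
  - move=> i; rewrite jE; apply: le_to (m1 i) _.
    apply: subset_trans (reach_delta src dst (sA i)) _; exact: subsetIl.
  - move=> i; rewrite jE; apply: le_to (m2 i) _.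
    apply: subset_trans (reach_delta src dst (sA i)) _; exact: subsetIr.
  - move=> D [mD _] l1 l2 i; rewrite jE; apply: le_delta (sA i) (tA i) _.
    by rewrite subsetI (le_reach (mD i) (m1 i) (l1 i)) (le_reach (mD i) (m2 i) (l2 i)).
move=> C1 C2 C3 [m1 _] [m2 _] [m3 _]; apply/ffunP => i; rewrite !ffunE.
apply/setP => e; case: (boolP (has (fun p => e \in p) P)) => [/hasP [p pP ep]|nh].
  have [x px] := pos st mP (m1 i) pP.
  have [y py] := pos st mP (m2 i) pP.
  have [z pz] := pos st mP (m3 i) pP.
  have L := KLmin st mP pP px (KLmax st mP pP py pz).
  have R := KLmax st mP pP (KLmin st mP pP px py) (KLmin st mP pP px pz).
  by rewrite L.2 // R.2 // minn_maxr.
apply/idP/idP => h; case/negP: nh; apply: Scov; apply/orP; [right|left]; exact: h.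
Qed.
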